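(* Let $F$ be a set-system (not assumed uniform). The following are equivalent: (1) $F$ is an HKE set-system; (2) for every two non-empty disjoint subfamilies $\Gamma_1,\Gamma_2\subseteq F$, $$\Big|\bigcap\Gamma_1-\bigcup\Gamma_2\Big|=\Big|\bigcap\Gamma_2-\bigcup\Gamma_1\Big|;$$ (3) the equality in (2) holds for every two non-empty disjoint subfamilies $\Gamma_1,\Gamma_2\subseteq F$ with $\Gamma_1\cup\Gamma_2=F$.
   Context: A set-system is a family of sets; throughout, set-systems are non-empty finite families of finite non-empty sets. A set-system $F$ is a hereditary König–Egerváry (HKE) set-system if there is a positive integer $\alpha$ such that $|\bigcup\Gamma|+|\bigcap\Gamma|=2\alpha$ for every non-empty subfamily $\Gamma\subseteq F$. $X-Y$ denotes set difference. *)

(* Defs.v *)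
From mathcomp Require Import all_boot.
Set Implicit Arguments. Unset Strict Implicit. Unset Printing Implicit Defensive.

Definition bigU (T : finType) (G : {set {set T}}) : {set T} := \bigcup_(A in G) A.
Definition bigI (T : finType) (G : {set {set T}}) : {set T} := \bigcap_(A in G) A.

Definition set_system (T : finType) (F : {set {set T}}) : Prop :=
  F != set0 /\ set0 \notin F.

Definition HKE (T : finType) (F : {set {set T}}) : Prop :=
  exists alpha : nat, 0 < alpha /\
    forall G : {set {set T}}, G \subset F -> G != set0 ->
      #|bigU G| + #|bigI G| = 2 * alpha.

(* Main.v *)
From mathcomp Require Import all_boot zify.
Require Import Defs.
Set Implicit Arguments. Unset Strict Implicit.

Section S.
Variable T : finType.
Implicit Types (A : {set T}) (P Q G : {set {set T}}).

Definition N P Q := #|bigI P :\: bigU Q|.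

Lemma bigU_add A G : A \notin G -> bigU (A |: G) = A :|: bigU G.
Proof. by move=> h; rewrite /bigU big_setU1. Qed.
Lemma bigI_add A G : A \notin G -> bigI (A |: G) = A :&: bigI G.
Proof. by move=> h; rewrite /bigI big_setU1. Qed.
Lemma bigU1 A : bigU [set A] = A. Proof. by rewrite /bigU big_set1. Qed.
Lemma bigI1 A : bigI [set A] = A. Proof. by rewrite /bigI big_set1. Qed.

Lemma Nsplit P Q A : A \notin P -> A \notin Q ->
  N P Q = N (A |: P) Q + N P (A |: Q).
Proof.
move=> hP hQ; rewrite /N bigI_add // bigU_add //.
rewrite -(cardsID A (bigI P :\: bigU Q)); congr (_ + _);
  apply: eq_card=> x; rewrite !inE;
  by case: (x \in A); case: (x \in bigI P); case: (x \in bigU Q).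
Qed.

Lemma fstep A G : A \notin G ->
  #|bigU (A |: G)| + #|bigI (A |: G)| + N G [set A] =
  #|bigU G| + #|bigI G| + N [set A] G.
Proof.
move=> h; rewrite /N bigU_add // bigI_add // bigU1 bigI1.
have h1 := cardsUI A (bigU G).
have h2 := cardsID (bigU G) A.
have h3 := cardsID A (bigI G).
rewrite (setIC A (bigI G)). lia.
Qed.

Lemma disjU (X Y : {set {set T}}) (A : {set T}) : [disjoint X & Y] -> A \notin X -> [disjoint X & A |: Y].
Proof.
move=> d hA.
rewrite -setI_eq0 setIUr setU_eq0 [X :&: Y]setIC !setI_eq0.
by rewrite disjoint_sym disjoints1 hA disjoint_sym d.
Qed.

Lemma hke_base F A G : HKE F -> A \in F -> A \notin G -> G \subset F -> G != set0 ->
  N [set A] G = N G [set A].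
Proof.
case=> a [_ H] hA hAG hG hG0.
have e1 := H (A |: G).
have e2 := H G hG hG0.
have e3 := fstep hAG.
rewrite e1 ?e2 in e3; first lia.
  by rewrite subUset sub1set hA hG.
by apply/set0Pn; exists A; rewrite setU11.
Qed.

Lemma hke_2 F : HKE F -> forall n G1 G2, #|G1| <= n -> G1 \subset F -> G2 \subset F ->
  G1 != set0 -> G2 != set0 -> [disjoint G1 & G2] -> N G1 G2 = N G2 G1.
Proof.
move=> hF; elim=> [|n IH] G1 G2 hn h1 h2 h10 h20 d.
  by rewrite -card_gt0 in h10; lia.
case/set0Pn: (h10) => A hA.
have hA2 : A \notin G2 by rewrite (disjointFr d hA).
have hAF : A \in F by apply: (subsetP h1).
have eG1 := setD1K hA.
case: (eqVneq (G1 :\ A) set0) => e.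
  rewrite -eG1 e setU0; exact: (hke_base hF hAF hA2 h2 h20).
have hA' : A \notin G1 :\ A by rewrite setD11.
have s' : G1 :\ A \subset F by apply: subset_trans (subD1set _ _) h1.
have c : #|G1 :\ A| <= n by move: hn; rewrite (cardsD1 A G1) hA; lia.
have d1 : [disjoint G1 :\ A & G2] by apply: disjointWl d; apply: subD1set.
have d2 : [disjoint G1 :\ A & A |: G2] by apply: disjU.
have i1 := IH _ _ c s' h2 e h20 d1.
have i2 := IH _ (A |: G2) c s'.
rewrite subUset sub1set hAF h2 in i2.
have i2' := i2 isT e.
have ne : A |: G2 != set0 by apply/set0Pn; exists A; rewrite setU11.
have i3 := i2' ne d2.
have sp1 := Nsplit hA2 hA'.
have sp2 := Nsplit hA' hA2.
rewrite eG1 in sp1 sp2. rewrite i1 i3 sp1 [N G1 G2 + _]addnC in sp2.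
by apply/eqP; rewrite -(eqn_add2l (N (A |: G2) (G1 :\ A))) sp2.
Qed.

Lemma three_2 (F : {set {set T}}) : 
  (forall G1 G2, G1 \subset F -> G2 \subset F ->
      G1 != set0 -> G2 != set0 -> [disjoint G1 & G2] -> G1 :|: G2 = F ->
      N G1 G2 = N G2 G1) ->
  forall n G1 G2, #|F :\: (G1 :|: G2)| <= n -> G1 \subset F -> G2 \subset F ->
  G1 != set0 -> G2 != set0 -> [disjoint G1 & G2] -> N G1 G2 = N G2 G1.
Proof.
move=> H3; elim=> [|n IH] G1 G2 hn h1 h2 h10 h20 d;
 (case: (eqVneq (F :\: (G1 :|: G2)) set0) => e;
  [apply: H3 => //; apply/eqP; rewrite eqEsubset subUset h1 h2 /= -setD_eq0 e //|]).
  by rewrite -card_gt0 in e; lia.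
case/set0Pn: e => A; rewrite !inE negb_or => /andP [/andP [hA1 hA2] hAF].
have e' : F :\: ((A |: G1) :|: G2) = (F :\: (G1 :|: G2)) :\ A.
  by apply/setP => x; rewrite !inE; case: (x == A); case: (x \in F); case: (x \in G1).
have e'' : F :\: (G1 :|: (A |: G2)) = (F :\: (G1 :|: G2)) :\ A.
  by apply/setP => x; rewrite !inE; case: (x == A); case: (x \in F); case: (x \in G1).
have c : #|(F :\: (G1 :|: G2)) :\ A| <= n.
  move: hn; rewrite (cardsD1 A (F :\: (G1 :|: G2))) !inE negb_or hA1 hA2 hAF; lia.
have sA1 : A |: G1 \subset F by rewrite subUset sub1set hAF h1.
have sA2 : A |: G2 \subset F by rewrite subUset sub1set hAF h2.
have nA1 : A |: G1 != set0 by apply/set0Pn; exists A; rewrite setU11.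
have nA2 : A |: G2 != set0 by apply/set0Pn; exists A; rewrite setU11.
have i1 := IH (A |: G1) G2; rewrite e' in i1.
have {}i1 := i1 c sA1 h2 nA1 h20.
have i2 := IH G1 (A |: G2); rewrite e'' in i2.
have {}i2 := i2 c h1 sA2 h10 nA2.
have dA1 : [disjoint A |: G1 & G2] by rewrite disjoint_sym; apply: disjU => //; rewrite disjoint_sym.
have dA2 : [disjoint G1 & A |: G2] by apply: disjU.
have {}i1 := i1 dA1.
have {}i2 := i2 dA2.
have sp1 := Nsplit hA1 hA2.
have sp2 := Nsplit hA2 hA1.
by rewrite sp1 sp2 i1 i2 addnC.
Qed.

Lemma two_1 (F : {set {set T}}) : set_system F ->
  (forall G1 G2, G1 \subset F -> G2 \subset F ->
      G1 != set0 -> G2 != set0 -> [disjoint G1 & G2] -> N G1 G2 = N G2 G1) ->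
  HKE F.
Proof.
move=> [hF0 hF] H2.
have key : forall n G, #|F :\: G| <= n -> G \subset F -> G != set0 ->
   #|bigU G| + #|bigI G| = #|bigU F| + #|bigI F|.
  elim=> [|n IH] G hn hG hG0; case: (eqVneq (F :\: G) set0) => e.
  - have h0 : G = F by apply/eqP; rewrite eqEsubset hG -setD_eq0 e /= eqxx.
    by rewrite h0.
  - by rewrite -card_gt0 in e; rewrite ltnNge hn in e.
  - have h0 : G = F by apply/eqP; rewrite eqEsubset hG -setD_eq0 e /= eqxx.
    by rewrite h0.
  case/set0Pn: e => A; rewrite !inE => /andP [hAG hAF].
  have e' : F :\: (A |: G) = (F :\: G) :\ A.
    by apply/setP => x; rewrite !inE; case: (x == A); case: (x \in F).
  have c : #|(F :\: G) :\ A| <= n.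
    by move: hn; rewrite (cardsD1 A (F :\: G)) !inE hAG hAF; lia.
  have i := IH (A |: G); rewrite e' in i.
  have {}i := i c.
  rewrite subUset sub1set hAF hG in i.
  have {}i := i isT.
  have ne : A |: G != set0 by apply/set0Pn; exists A; rewrite setU11.
  have {}i := i ne.
  have st := fstep hAG.
  have h2 := H2 [set A] G; rewrite sub1set hAF disjoints1 hAG in h2.
  have ne1 : [set A] != set0 by apply/set0Pn; exists A; rewrite set11.
  have {}h2 := h2 isT hG ne1 hG0 isT.
  rewrite h2 i in st.
  by apply/eqP; rewrite -(eqn_add2r (N G [set A])) -st.
case/set0Pn: hF0 => A0 hA0.
exists #|A0|; split.
  rewrite card_gt0; apply/negP => /eqP e; by rewrite -e hA0 in hF.
move=> G hG hG0.
rewrite (key _ G (leqnn _) hG hG0).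
have ne1 : [set A0] != set0 by apply/set0Pn; exists A0; rewrite set11.
rewrite -(key _ [set A0] (leqnn _)) ?sub1set // bigU1 bigI1; lia.
Qed.
End S.

Theorem theorem2p5 (T : finType) (F : {set {set T}}) :
  set_system F ->
  (HKE F <->
   (forall G1 G2 : {set {set T}}, G1 \subset F -> G2 \subset F ->
      G1 != set0 -> G2 != set0 -> [disjoint G1 & G2] ->
      #|bigI G1 :\: bigU G2| = #|bigI G2 :\: bigU G1|)) /\
  (HKE F <->
   (forall G1 G2 : {set {set T}}, G1 \subset F -> G2 \subset F ->
      G1 != set0 -> G2 != set0 -> [disjoint G1 & G2] -> G1 :|: G2 = F ->
      #|bigI G1 :\: bigU G2| = #|bigI G2 :\: bigU G1|)).
Proof.
move=> hs; split; split.
- move=> h G1 G2; exact: (hke_2 h (leqnn _)).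
- move=> h; exact: two_1.
- move=> h G1 G2 h1 h2 h3 h4 h5 _; exact: (hke_2 h (leqnn _)).
- move=> h; apply: two_1 => // G1 G2; exact: (three_2 h (leqnn _)).
Qed.
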